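(* Let $a$ be a non-degenerate arrow environment, let $x,y\in\mathbb Z_+$ and $l\ge1$. If the process $Z^+$ on $a$ with initial value $Z^+_0=x$ satisfies $Z^+_l\ge y$, then the process $Z^-$ on the shifted arrow environment $\theta^{l-1}a$ with initial value $Z^-_0=y$ satisfies $Z^-_l\le x$.
   Context: Notation: $\mathbb N=\{1,2,\dots\}$, $\mathbb Z_+=\{0,1,2,\dots\}$. An arrow environment is $a\in\{0,1\}^{\mathbb Z\times\mathbb N}$; for $z\in\mathbb Z$, $(\theta^z a)(x,i)=a(x+z,i)$. A sequence $b\in\{0,1\}^{\mathbb N}$ is non-degenerate if $b(i)\ne b(i+1)$ for infinitely many $i$; $a$ is non-degenerate if every $a(x,\cdot)$ is. For non-degenerate $b$: $U^+_b(0)=0$ and for $x\ge1$, $U^+_b(x)$ is the number of indices $i$ with $b(i)=1$ that precede the $x$-th index $j$ with $b(j)=0$; $U^-_b(x)$ is defined the same way with the roles of $0$ and $1$ exchanged. For non-degenerate $a$ and $y\in\mathbb Z_+$, the processes on $a$ with initial value $y$ are $Z^+_0=y$, $Z^+_n=U^+_{a(n-1,\cdot)}(Z^+_{n-1})$ and $Z^-_0=y$, $Z^-_n=U^-_{a(1-n,\cdot)}(Z^-_{n-1})$ for $n\ge1$. *)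

(* Defs.v *)
From Stdlib Require Import Arith ZArith Lia ClassicalEpsilon.

(* A sequence b in {0,1}^N is represented as b : nat -> bool
   (true = 1, false = 0); only indices i >= 1 are meaningful. *)

Fixpoint cnt (p : bool) (b : nat -> bool) (n : nat) : nat :=
  match n with
  | O => O
  | S k => cnt p b k + (if Bool.eqb (b (S k)) p then 1 else 0)
  end.

Definition nondeg (b : nat -> bool) : Prop :=
  forall N : nat, exists i, N <= i /\ 1 <= i /\ b i <> b (S i).

(* the x-th index j >= 1 with b j = p (well defined for non-degenerate b, x >= 1) *)
Definition nth_pos (p : bool) (b : nat -> bool) (x : nat) : nat :=
  epsilon (inhabits 0%nat) (fun j => 1 <= j /\ b j = p /\ cnt p b j = x).

Definition Uplus (b : nat -> bool) (x : nat) : nat :=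
  match x with
  | O => O
  | S _ => cnt true b (nth_pos false b x - 1)
  end.

Definition Uminus (b : nat -> bool) (x : nat) : nat :=
  match x with
  | O => O
  | S _ => cnt false b (nth_pos true b x - 1)
  end.

Definition env := Z -> nat -> bool.

Definition nondeg_env (a : env) : Prop := forall x : Z, nondeg (a x).

Definition theta_shift (z : Z) (a : env) : env := fun x i => a (x + z)%Z i.

Fixpoint Zpproc (a : env) (y : nat) (n : nat) : nat :=
  match n with
  | O => y
  | S k => Uplus (a (Z.of_nat k)) (Zpproc a y k)
  end.

(* Z^-_0 = y, Z^-_n = U^-_{a(1-n,.)}(Z^-_{n-1}); for n = k+1, 1-n = -k *)
Fixpoint Zmproc (a : env) (y : nat) (n : nat) : nat :=
  match n with
  | O => y
  | S k => Uminus (a (- Z.of_nat k)%Z) (Zmproc a y k)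
  end.

(* Main.v *)
Require Import Defs.
From Stdlib Require Import Arith ZArith.
From Stdlib Require Import Lia ClassicalEpsilon FunctionalExtensionality.

Lemma cnt_S p b k : cnt p b (S k) = cnt p b k + (if Bool.eqb (b (S k)) p then 1 else 0).
Proof. reflexivity. Qed.

Lemma cnt_mono p b n m : n <= m -> cnt p b n <= cnt p b m.
Proof.
  induction 1; auto. rewrite cnt_S. lia.
Qed.

Lemma cnt_hit p b k : b (S k) = p -> cnt p b (S k) = cnt p b k + 1.
Proof. intro H. rewrite cnt_S, H. destruct p; reflexivity. Qed.

Lemma nondeg_inf p b : nondeg b -> forall n, exists i, n < i /\ b i = p.
Proof.
  intros Hb n. destruct (Hb (S n)) as [i [Hi [_ Hne]]].
  destruct (Bool.bool_dec (b i) p) as [E|E].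
  - exists i. split; [lia|auto].
  - exists (S i). split; [lia|]. destruct (b i), (b (S i)), p; congruence.
Qed.

Lemma cnt_unb p b : nondeg b -> forall x, exists n, x <= cnt p b n.
Proof.
  intros Hb x. induction x as [|x [n Hn]].
  - exists 0. lia.
  - destruct (nondeg_inf p b Hb n) as [i [Hi Ep]].
    destruct i as [|i]; [lia|]. exists (S i).
    rewrite cnt_hit by auto. pose proof (cnt_mono p b n i ltac:(lia)). lia.
Qed.

Lemma cnt_ivt p b x : 1 <= x -> forall n, x <= cnt p b n ->
  exists j, 1 <= j /\ b j = p /\ cnt p b j = x.
Proof.
  intros Hx n. induction n as [|k IH]; intros H.
  - simpl in H. lia.
  - destruct (le_lt_dec x (cnt p b k)) as [L|L]; [now apply IH|].
    rewrite cnt_S in H. exists (S k).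
    destruct (Bool.eqb (b (S k)) p) eqn:E; [|lia].
    apply Bool.eqb_prop in E. split; [lia|]. split; auto.
    rewrite cnt_S, E. destruct p; simpl; lia.
Qed.

Lemma nth_pos_spec p b x : nondeg b -> 1 <= x ->
  1 <= nth_pos p b x /\ b (nth_pos p b x) = p /\ cnt p b (nth_pos p b x) = x.
Proof.
  intros Hb Hx. unfold nth_pos. apply epsilon_spec.
  destruct (cnt_unb p b Hb x) as [n Hn]. eapply cnt_ivt; eauto.
Qed.

Lemma duality b x y : nondeg b -> y <= Uplus b x -> Uminus b y <= x.
Proof.
  intros Hb H. destruct x as [|x]. { simpl in H. destruct y; simpl; lia. }
  destruct y as [|y]. { simpl. lia. }
  unfold Uplus in H. unfold Uminus.
  destruct (nth_pos_spec false b (S x) Hb ltac:(lia)) as [A1 [A2 A3]].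
  destruct (nth_pos_spec true b (S y) Hb ltac:(lia)) as [B1 [B2 B3]].
  set (j0 := nth_pos false b (S x)) in *.
  set (j1 := nth_pos true b (S y)) in *.
  assert (j1 < j0).
  { destruct (lt_dec j1 j0) as [L|L]; auto. exfalso.
    assert (j1 <> j0) by congruence.
    destruct j1 as [|k]; [lia|].
    rewrite cnt_hit in B3 by auto.
    pose proof (cnt_mono true b (j0 - 1) k ltac:(lia)). lia. }
  pose proof (cnt_mono false b (j1 - 1) j0 ltac:(lia)). lia.
Qed.

Lemma Zp_first a x l :
  Zpproc a x (S l) = Zpproc (theta_shift 1%Z a) (Uplus (a 0%Z) x) l.
Proof.
  induction l as [|l IH]; [reflexivity|].
  change (Zpproc a x (S (S l))) with (Uplus (a (Z.of_nat (S l))) (Zpproc a x (S l))).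
  rewrite IH. simpl. f_equal. unfold theta_shift.
  apply functional_extensionality; intro i. f_equal. lia.
Qed.

Lemma Zm_ext a a' y n : (forall z, a z = a' z) -> Zmproc a y n = Zmproc a' y n.
Proof.
  intro E. induction n; simpl; [reflexivity|]. rewrite IHn, E. reflexivity.
Qed.

Theorem lemma2p6 (a : env) (Ha : nondeg_env a) (x y l : nat) (Hl : 1 <= l) :
  y <= Zpproc a x l -> Zmproc (theta_shift ((Z.of_nat l - 1)%Z) a) y l <= x.
Proof.
  clear Hl. revert a Ha x y. induction l as [|l IH]; intros a Ha x y H.
  - simpl in *. exact H.
  - rewrite Zp_first in H.
    assert (Ha' : nondeg_env (theta_shift 1%Z a)) by (intro z; apply Ha).
    pose proof (IH _ Ha' _ _ H) as H1.
    change (Zmproc ?A y (S l)) with (Uminus (A (- Z.of_nat l)%Z) (Zmproc A y l)).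
    rewrite (Zm_ext (theta_shift (Z.of_nat (S l) - 1) a)
      (theta_shift (Z.of_nat l - 1) (theta_shift 1 a))).
    + apply duality; [apply Ha|].
      assert (E : forall e, e = a 0%Z -> Zmproc (theta_shift (Z.of_nat l - 1) (theta_shift 1 a)) y l <= Uplus e x) by (intros e ->; exact H1).
      apply E. unfold theta_shift. apply functional_extensionality; intro i. f_equal. lia.
    + intro z. unfold theta_shift. apply functional_extensionality; intro i. f_equal. lia.
Qed.
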